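(* Let $\langle T,\le\rangle$ be a temporal flow and let $v$ be a temporal assignment over variables on $T$, extended to all formulas as described in the context. Then for every formula $\varphi$, the function $v(\varphi,\cdot):T\to\{0,\tfrac12,1\}$ is admissible.
   Context: A temporal flow is a totally ordered infinite set $\langle T,\le\rangle$. On $\{0,\frac12,1\}$ (with $0<\frac12<1$) put $\neg_3x=1-x$ and $x\to_3y=\min(1,1-x+y)$. A function $f:T\to\{0,\frac12,1\}$ is admissible if either (i) $f$ is constant (with value $0$, $\frac12$ or $1$), or (ii) there exist $i\in\{0,1\}$ and $t\in T$, with $t$ not the minimum of $T$ (if $T$ has a minimum), such that $f(t')=i$ for all $t'\ge t$ and $f(t'')=\frac12$ for all $t''<t$. Formulas are built from propositional variables and $\bot$ using the connectives $\neg$ and $\to$. A temporal assignment over variables is a map $v:VAR\times T\to\{0,\frac12,1\}$ such that $v(x,\cdot)$ is admissible for every variable $x$. It is extended to formulas inductively: $v(\bot,t)=0$; $v(\neg\psi,t)=\neg_3v(\psi,t)$; and $v(\psi\to\chi,t)=v(\psi,t)\to_3v(\chi,t)$ if $v(\psi,t)\to_3v(\chi,t)=v(\psi,t')\to_3v(\chi,t')$ for every $t'\ge t$, and $v(\psi\to\chi,t)=\frac12$ otherwise. *)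

(* Defs.v *)
From Stdlib Require Import List.

(* Truth values {0, 1/2, 1} with 0 < 1/2 < 1. *)
Inductive V3 : Type := V0 | Vh | V1.

(* neg_3 x = 1 - x *)
Definition neg3 (x : V3) : V3 :=
  match x with V0 => V1 | Vh => Vh | V1 => V0 end.

(* x ->_3 y = min(1, 1 - x + y) *)
Definition imp3 (x y : V3) : V3 :=
  match x, y with
  | V0, _ => V1
  | Vh, V0 => Vh
  | Vh, _ => V1
  | V1, y => y
  end.

(* Temporal flow: a totally ordered infinite set <T, le>. *)
Definition temporal_flow (T : Type) (le : T -> T -> Prop) : Prop :=
  (forall x, le x x) /\
  (forall x y z, le x y -> le y z -> le x z) /\
  (forall x y, le x y -> le y x -> x = y) /\
  (forall x y, le x y \/ le y x) /\
  (forall l : list T, exists x, ~ In x l).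

Definition is_minimum (T : Type) (le : T -> T -> Prop) (t : T) : Prop :=
  forall t', le t t'.

Definition admissible (T : Type) (le : T -> T -> Prop) (f : T -> V3) : Prop :=
  (exists c : V3, forall t, f t = c) \/
  (exists (i : V3) (t : T),
      (i = V0 \/ i = V1) /\ ~ is_minimum T le t /\
      (forall t', le t t' -> f t' = i) /\
      (forall t'', le t'' t -> t'' <> t -> f t'' = Vh)).

Inductive formula : Type :=
  | Var : nat -> formula
  | Bot : formula
  | Neg : formula -> formula
  | Imp : formula -> formula -> formula.

Definition temporal_assignment (T : Type) (le : T -> T -> Prop)
    (v : nat -> T -> V3) : Prop :=
  forall x, admissible T le (v x).

From Stdlib Require Import Classical ClassicalEpsilon.

Definition pdec (P : Prop) : {P} + {~ P} :=
  excluded_middle_informative P.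

Fixpoint eval (T : Type) (le : T -> T -> Prop) (v : nat -> T -> V3)
    (phi : formula) (t : T) : V3 :=
  match phi with
  | Var x => v x t
  | Bot => V0
  | Neg psi => neg3 (eval T le v psi t)
  | Imp psi chi =>
      if pdec (forall t', le t t' ->
                 imp3 (eval T le v psi t) (eval T le v chi t)
                 = imp3 (eval T le v psi t') (eval T le v chi t'))
      then imp3 (eval T le v psi t) (eval T le v chi t)
      else Vh
  end.

(* Main.v *)
Require Import Defs.
From Stdlib Require Import List Classical ClassicalEpsilon.

Section S.
Variable T : Type.
Variable le : T -> T -> Prop.
Hypothesis Hrefl : forall x, le x x.
Hypothesis Htrans : forall x y z, le x y -> le y z -> le x z.
Hypothesis Hanti : forall x y, le x y -> le y x -> x = y.
Hypothesis Htot : forall x y, le x y \/ le y x.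

Definition regular (f : T -> V3) := exists l : list T,
  forall t t', le t t' -> (forall k, In k l -> le k t' -> le k t) -> f t = f t'.

Lemma list_max (l : list T) (P : T -> Prop) :
  (exists k, In k l /\ P k) ->
  exists k, In k l /\ P k /\ forall k', In k' l -> P k' -> le k' k.
Proof.
  induction l as [|a l IH]; intros [k [Hk Pk]]; [destruct Hk|].
  destruct (classic (exists k, In k l /\ P k)) as [Hex|Hno].
  - destruct (IH Hex) as [m [Hm [Pm Hmax]]].
    destruct (classic (P a)) as [Pa|nPa].
    + destruct (Htot a m) as [Ham|Hma].
      * exists m; split; [right; auto|split; auto].
        intros k' [E|Hk'] Pk'; [subst; auto|auto].
      * exists a; split; [left; auto|split; auto].
        intros k' [E|Hk'] Pk'; [subst; auto|eauto].
    + exists m; split; [right; auto|split; auto].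
      intros k' [<-|Hk'] Pk'; [contradiction|auto].
  - destruct Hk as [<-|Hk]; [|exfalso; eauto].
    exists a; split; [left; auto|split; auto].
    intros k' [<-|Hk'] Pk'; [auto|exfalso; eauto].
Qed.

Lemma list_min (l : list T) (P : T -> Prop) :
  (exists k, In k l /\ P k) ->
  exists k, In k l /\ P k /\ forall k', In k' l -> P k' -> le k k'.
Proof.
  induction l as [|a l IH]; intros [k [Hk Pk]]; [destruct Hk|].
  destruct (classic (exists k, In k l /\ P k)) as [Hex|Hno].
  - destruct (IH Hex) as [m [Hm [Pm Hmax]]].
    destruct (classic (P a)) as [Pa|nPa].
    + destruct (Htot a m) as [Ham|Hma].
      * exists a; split; [left; auto|split; auto].
        intros k' [E|Hk'] Pk'; [subst; auto|eauto].
      * exists m; split; [right; auto|split; auto].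
        intros k' [E|Hk'] Pk'; [subst; auto|auto].
    + exists m; split; [right; auto|split; auto].
      intros k' [<-|Hk'] Pk'; [contradiction|auto].
  - destruct Hk as [<-|Hk]; [|exfalso; eauto].
    exists a; split; [left; auto|split; auto].
    intros k' [<-|Hk'] Pk'; [auto|exfalso; eauto].
Qed.

Lemma adm_regular f : admissible T le f -> regular f.
Proof.
  intros [[c Hc]|[i [ta [Hi [Hnm [Hge Hlt]]]]]].
  - exists nil; intros; rewrite !Hc; auto.
  - exists (ta :: nil); intros t t' Htt' H.
    destruct (classic (le ta t)) as [Ht|Ht].
    + rewrite (Hge t Ht), (Hge t'); eauto.
    + assert (~ le ta t') by (intro; apply Ht; apply H; simpl; auto).
      rewrite (Hlt t), (Hlt t'); auto.
      * destruct (Htot t' ta); auto; contradiction.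
      * intros ->; auto.
      * destruct (Htot t ta); auto; contradiction.
      * intros ->; auto.
Qed.

Lemma h_adm (x0 : T) (g : T -> V3) : regular g ->
  admissible T le (fun t => if pdec (forall t', le t t' -> g t = g t') then g t else Vh).
Proof.
  intros [l Hreg].
  set (S := fun t => forall t', le t t' -> g t = g t').
  assert (Sup : forall t t', S t -> le t t' -> S t').
  { intros t t' St H t'' H'. rewrite <- (St t' H), (St t''); eauto. }
  assert (Sval : forall t t', S t -> S t' -> g t = g t').
  { intros t t' St St'. destruct (Htot t t'); [auto|symmetry; auto]. }
  destruct (classic (forall t, S t)) as [Hall|Hnall].
  { left. exists (g x0). intro t. destruct pdec as [St|nSt].
    - apply Sval; [apply Hall|apply Hall].
    - exfalso; apply nSt; apply Hall. }
  destruct (classic (exists s, S s)) as [[s Hs]|Hnone].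
  2:{ left; exists Vh; intro t; destruct pdec as [St|]; [exfalso; eauto|reflexivity]. }
  apply not_all_ex_not in Hnall as [s0 Hs0].
  destruct (classic (g s = Vh)) as [Eh|Nh].
  { left; exists Vh; intro t; destruct pdec as [St|]; [|auto].
    rewrite (Sval t s St Hs); auto. }
  assert (Key : forall s', S s' -> (exists k, In k l /\ S k /\ le k s') \/ (forall t, S t)).
  { intros s' Hs'.
    destruct (classic (exists k, In k l /\ le k s')) as [Hex|Hno].
    - left. destruct (list_max l (fun k => le k s') Hex) as [m [Hm [Pm Hmax]]].
      assert (E : forall t, le m t -> g t = g s').
      { intros t Hmt. destruct (Htot s' t) as [H|H].
        - symmetry; apply Hs'; auto.
        - apply Hreg; auto. intros k Hk Hks. eauto. }
      exists m; split; [auto|split; auto].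
      intros t' Ht'. rewrite (E m (Hrefl m)), (E t'); auto.
    - right. assert (E : forall t, g t = g s').
      { intro t. destruct (Htot s' t) as [H|H].
        - symmetry; apply Hs'; auto.
        - apply Hreg; auto. intros k Hk Hks. exfalso; eauto. }
      intros t t' _. rewrite !E; auto. }
  assert (Hleast : exists m, S m /\ forall s', S s' -> le m s').
  { destruct (classic (exists k, In k l /\ S k)) as [Hex|Hno].
    - destruct (list_min l S Hex) as [m [Hm [Sm Hmin]]].
      exists m; split; auto. intros s' Hs'.
      destruct (Key s' Hs') as [[k [Hk [Sk Hks]]]|Hall]; [eauto|exfalso; eauto].
    - exfalso. destruct (Key s Hs) as [[k [Hk [Sk Hks]]]|Hall]; eauto. }
  destruct Hleast as [m [Sm Hmin]].
  right. exists (g m), m. split; [|split; [|split]].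
  - rewrite (Sval m s Sm Hs). destruct (g s); auto; contradiction.
  - intro Hm. apply Hs0. apply Sup with m; auto.
  - intros t' Ht'. destruct pdec as [St|nSt].
    + apply Sval; [auto|apply Sup with m; auto].
    + exfalso; apply nSt; apply Sup with m; auto.
  - intros t'' Ht'' Hne. destruct pdec as [St|]; auto.
    exfalso; apply Hne; apply Hanti; auto.
Qed.

End S.

Theorem mainTheorem2 (T : Type) (le : T -> T -> Prop)
    (Hflow : temporal_flow T le)
    (v : nat -> T -> V3) (Hv : temporal_assignment T le v) :
  forall phi : formula, admissible T le (eval T le v phi).
Proof.
  destruct Hflow as [Hrefl [Htrans [Hanti [Htot Hinf]]]].
  destruct (Hinf nil) as [x0 _].
  induction phi as [x| |p IH|p IHp q IHq]; simpl.
  - apply Hv.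
  - left; exists V0; auto.
  - destruct IH as [[c Hc]|[i [t [Hi [Hnm [Hge Hlt]]]]]].
    + left; exists (neg3 c); intro t; rewrite Hc; auto.
    + right; exists (neg3 i), t; split; [|split; [auto|split]].
      * destruct Hi as [->| ->]; simpl; auto.
      * intros t' H; rewrite Hge; auto.
      * intros t'' H1 H2; rewrite Hlt; auto.
  - apply (h_adm T le Hrefl Htrans Hanti Htot x0
             (fun t => imp3 (eval T le v p t) (eval T le v q t))).
    destruct (adm_regular T le Hrefl Htrans Hanti Htot _ IHp) as [la Ha].
    destruct (adm_regular T le Hrefl Htrans Hanti Htot _ IHq) as [lb Hb].
    exists (la ++ lb). intros t t' H Hk.
    rewrite (Ha t t'), (Hb t t'); auto;
      intros k Hin; apply Hk; apply in_or_app; auto.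
Qed.
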